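(* Fix an assignment matrix $A$ for which event $\mathcal A$ holds, and let $Q$ be the $m\times m$ matrix with $Q_{ij}=B_{ij}/d$ for $i\ne j$ and $Q_{ii}=1-\frac1d\sum_{k\ne i}B_{ik}$, where $d=\frac32mnp^2$. Then $Q$ is a symmetric stochastic matrix (reversible with respect to the uniform distribution) and $$\mu^*(Q)\ \ge\ \frac13 .$$
   Context: $A\in\{0,1\}^{n\times m}$ is an assignment matrix ($n$ users, $m\ge2$ items), $p\in(0,1]$, $B=A^\top A$. Event $\mathcal A$: $\frac12np^2\le B_{ij}\le\frac32np^2$ for all $i\ne j\in[m]$. For a stochastic matrix $M$ reversible with respect to a positive probability vector (so its eigenvalues are real, $1=\lambda_1\ge\lambda_2\ge\dots\ge\lambda_m$), the spectral gap is $\mu^*(M)=1-\max\{|\lambda_2|,|\lambda_m|\}$. *)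

(* Defs.v *)
From HB Require Import structures.
From mathcomp Require Import all_boot all_order all_algebra.
From mathcomp Require Import reals.
Set Implicit Arguments. Unset Strict Implicit. Unset Printing Implicit Defensive.
Import Order.TTheory GRing.Theory Num.Theory.
Local Open Scope ring_scope.

Definition gram (R : realType) (n m : nat) (A : 'M[R]_(n, m)) : 'M[R]_m :=
  A^T *m A.

Definition Qmat (R : realType) (n m : nat) (p : R) (A : 'M[R]_(n, m)) : 'M[R]_m :=
  let B := gram A in
  let d := 3 / 2 * m%:R * n%:R * p ^+ 2 in
  \matrix_(i, j) (if i == j then 1 - (\sum_(k < m | k != i) B i k) / d
                  else B i j / d).

Definition eventA (R : realType) (n m : nat) (p : R) (A : 'M[R]_(n, m)) : Prop :=
  forall i j : 'I_m, i != j ->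
    1 / 2 * n%:R * p ^+ 2 <= gram A i j <= 3 / 2 * n%:R * p ^+ 2.

Definition stochastic (R : realType) (m : nat) (M : 'M[R]_m) : Prop :=
  (forall i j, 0 <= M i j) /\ (forall i, \sum_j M i j = 1).

Definition symmetric_mx (R : realType) (m : nat) (M : 'M[R]_m) : Prop :=
  M^T = M.

Definition reversible (R : realType) (m : nat) (pi : 'I_m -> R) (M : 'M[R]_m) : Prop :=
  forall i j, pi i * M i j = pi j * M j i.

(* s is the list of eigenvalues of M (with algebraic multiplicity, all real),
   sorted in nonincreasing order: lambda_1 >= ... >= lambda_m. *)
Definition eigvals_sorted (R : realType) (m : nat) (M : 'M[R]_m) (s : seq R) : Prop :=
  sorted (fun x y => y <= x) s /\
  char_poly M = \prod_(x <- s) ('X - x%:P).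

(* mu^* = 1 - max(|lambda_2|, |lambda_m|) *)
Definition spectral_gap_of (R : realType) (s : seq R) : R :=
  1 - Num.max `|s`_1| `|last 0 s|.

(* Main.v *)
Require Import Defs.
From HB Require Import structures.
From mathcomp Require Import all_boot all_order all_algebra.
From mathcomp Require Import reals.
From mathcomp Require Import complex.
From mathcomp Require Import ring lra.
Import Order.TTheory GRing.Theory Num.Theory.
Local Open Scope ring_scope.

Lemma gram_sym (R : realType) n m (A : 'M[R]_(n, m)) i j : gram A i j = gram A j i.
Proof. by rewrite /gram !mxE; apply: eq_bigr => k _; rewrite !mxE mulrC. Qed.

Lemma Qprops (R : realType) (n m : nat) (p : R) (A : 'M[R]_(n, m)) :
  (0 < n)%N -> (2 <= m)%N -> 0 < p -> eventA p A ->
  let Q := Qmat p A in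
  [/\ forall i j, Q i j = Q j i, forall i, \sum_j Q i j = 1 &
      forall i j, 1 / (3 * m%:R) <= Q i j].
Proof.
move=> n0 m2 p0 HA Q.
pose e := n%:R * p ^+ 2.
have e0 : 0 < e by rewrite mulr_gt0 ?exprn_gt0 // ltr0n.
have m0 : 0 < m%:R :> R by rewrite ltr0n; apply: leq_trans m2.
have dE : 3 / 2 * m%:R * n%:R * p ^+ 2 = 3 / 2 * m%:R * e by rewrite /e !mulrA.
have d0 : 0 < 3 / 2 * m%:R * e.
  by apply: mulr_gt0 => //; apply: mulr_gt0 => //; lra.
have Qoff : forall i j, i != j -> Q i j = gram A i j / (3 / 2 * m%:R * e).
  by move=> i j ij; rewrite /Q /Qmat mxE (negbTE ij) dE.
have Qdiag : forall i, Q i i = 1 - (\sum_(k < m | k != i) gram A i k) / (3 / 2 * m%:R * e).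
  by move=> i; rewrite /Q /Qmat mxE eqxx dE.
split.
- move=> i j; case: (eqVneq i j) => [->//|ij].
  have ji : j != i by rewrite eq_sym.
  by rewrite (Qoff i j ij) (Qoff j i ji) gram_sym.
- move=> i; rewrite (bigD1 i) //= Qdiag.
  rewrite [X in _ + X](eq_bigr (fun k => gram A i k / (3 / 2 * m%:R * e))); last first.
    by move=> k ki; rewrite Qoff // eq_sym.
  by rewrite -mulr_suml subrK.
- move=> i j.
  have lb : 1 / (3 * m%:R) = (1/2 * e) / (3 / 2 * m%:R * e) :> R.
    by field; rewrite !gt_eqF.
  case: (eqVneq i j) => [<-|ij]; last first.
    rewrite Qoff // lb ler_pM2r ?invr_gt0 //.
    by case/andP: (HA i j ij) => H _; move: H; rewrite /e !mulrA.
  rewrite Qdiag.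
  have Hs : \sum_(k < m | k != i) gram A i k <= (m%:R - 1) * (3/2 * e).
    apply: (@le_trans _ _ (\sum_(k < m | k != i) (3/2 * e))).
      apply: ler_sum => k ki.
      have ik : i != k by rewrite eq_sym.
      by case/andP: (HA i k ik) => _ H; move: H; rewrite /e !mulrA.
    rewrite sumr_const cardC1 card_ord -[X in X <= _]mulr_natl.
    by rewrite -subn1 natrB ?(leq_trans _ m2).
  have H1 : (m%:R - 1) * (3/2 * e) / (3/2 * m%:R * e) = 1 - 1 / m%:R.
    by field; rewrite !gt_eqF.
  have H2 : 1 / (3 * m%:R) = (1 / m%:R) / 3 :> R by field; rewrite !gt_eqF.
  have H3 : (\sum_(k < m | k != i) gram A i k) / (3/2 * m%:R * e)
      <= (m%:R - 1) * (3/2 * e) / (3/2 * m%:R * e).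
    by rewrite ler_pM2r ?invr_gt0.
  rewrite H1 in H3.
  have x0 : 0 < 1 / m%:R :> R by rewrite divr_gt0.
  rewrite H2; move: H3 x0; set S := (_ / (3/2 * m%:R * e)); set x := 1 / m%:R; lra.
Qed.

Lemma core_bound (R : realType) m (Q : 'M[R]_m) :
  (forall i j, Q i j = Q j i) -> (forall i, \sum_j Q i j = 1) ->
  (forall i j, 1 / (3 * m%:R) <= Q i j) ->
  forall (v : 'rV[R]_m) (l : R), v *m Q = l *: v -> \sum_i v 0 i = 0 -> v != 0 ->
  `|l| <= 2 / 3.
Proof.
move=> Hsym Hrow Hlb v l Hv Hs vn0.
have [j0 vj0'] : exists j0, v 0 j0 != 0.
  have : ~~ [forall k, v 0 k == 0].
    apply: contra vn0 => /forallP H; apply/eqP/matrixP => a b.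
    by rewrite ord1 mxE; apply/eqP/H.
  by rewrite negb_forall => /existsP.
pose j := Order.arg_max j0 xpredT (fun k => `|v 0 k|).
have jmax : forall k, `|v 0 k| <= `|v 0 j|.
  rewrite /j; case: arg_maxP => //= k0 _ Hk k; exact: Hk.
have vj0 : 0 < `|v 0 j|.
  rewrite lt_neqAle normr_ge0 andbT eq_sym; apply: contra vn0 => /eqP vj.
  apply/eqP/matrixP => a b; rewrite !mxE ord1; apply/eqP; rewrite -normr_eq0 eq_le normr_ge0 andbT.
  by rewrite -vj jmax.
have m0 : 0 < m%:R :> R by rewrite ltr0n; apply: leq_ltn_trans (ltn_ord j0).
pose c : R := 1 / (3 * m%:R).
have Hlb' : forall i j, c <= Q i j := Hlb.
have Hcol : forall k, \sum_i Q i k = 1.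
  by move=> k; rewrite -(Hrow k); apply: eq_bigr => i _; rewrite Hsym.
have E1 : l * v 0 j = \sum_i v 0 i * (Q i j - c).
  have -> : l * v 0 j = (v *m Q) 0 j by rewrite Hv !mxE.
  rewrite mxE [RHS](eq_bigr (fun i => v 0 i * Q i j - v 0 i * c)); last first.
    by move=> i _; rewrite mulrBr.
  by rewrite sumrB -mulr_suml Hs mul0r subr0.
have E2 : `|l| * `|v 0 j| <= `|v 0 j| * (2 / 3).
  rewrite -normrM E1.
  apply: (le_trans (ler_norm_sum _ _ _)).
  apply: (@le_trans _ _ (\sum_i `|v 0 j| * (Q i j - c))).
    apply: ler_sum => i _; rewrite normrM (ger0_norm (_ : 0 <= Q i j - c)).
      by rewrite ler_wpM2r ?subr_ge0 ?Hlb' ?jmax.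
    by rewrite subr_ge0 Hlb'.
  rewrite -mulr_sumr sumrB Hcol sumr_const card_ord.
  have -> : c *+ m = 1 / 3 by rewrite -mulr_natr /c; field; rewrite gt_eqF.
  by apply: le_refl || (rewrite ler_pM2l //; lra).
by rewrite mulrC ler_pM2l // in E2.
Qed.

Lemma det_rank1 (T : comNzRingType) k (a c : T) : (k.+1)%:R * a = 1 ->
  \det (1%:M + c *: const_mx a : 'M[T]_k.+1) = 1 + c.
Proof.
move=> Ha.
pose S : 'M[T]_k.+1 := \matrix_(i, j) (if j == ord0 then 1 else (i == j)%:R).
pose r : 'M[T]_k.+1 := \matrix_(i, j) (if i == ord0 then (if j == ord0 then 1 else a) else 0).
have HS : (1%:M + c *: const_mx a) *m S = S *m (1%:M + c *: r).
  rewrite mulmxDl mulmxDr mul1mx mulmx1; congr (_ + _).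
  rewrite -!scalemxAl -scalemxAr; congr (_ *: _).
  apply/matrixP => i j; rewrite !mxE.
  rewrite [RHS](bigD1 ord0) //= !mxE eqxx mul1r.
  rewrite [X in _ = _ + X]big1 ?addr0; last by move=> l l0; rewrite !mxE (negbTE l0) mulr0.
  under eq_bigr do rewrite !mxE.
  have [j0|j0] := eqVneq j ord0.
    by rewrite sumr_const card_ord mulr1 -mulr_natl Ha.
  rewrite (bigD1 j) //= eqxx mulr1 big1 ?addr0 // => l lj.
  by rewrite (negbTE lj) mulr0.
have dS : \det S = 1.
  rewrite det_trig; last first.
    apply/is_trig_mxP => i j ij; rewrite mxE.
    have -> : (j == ord0) = false by apply/negbTE; rewrite -lt0n (leq_ltn_trans _ ij).
    by rewrite -val_eqE /= ltn_eqF.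
  by apply: big1 => i _; rewrite mxE; case: (i == ord0); rewrite ?eqxx.
have := congr1 determinant HS; rewrite !det_mulmx dS mulr1 mul1r => ->.
rewrite -det_tr det_trig; last first.
  apply/is_trig_mxP => i j ij; rewrite !mxE.
  have -> : (j == ord0) = false by apply/negbTE; rewrite -lt0n (leq_ltn_trans _ ij).
  by rewrite -val_eqE /= (gtn_eqF ij) add0r mulr0.
rewrite big_ord_recl !mxE !eqxx mulr1 big1 ?mulr1 //.
by move=> i _; rewrite !mxE eqxx /= mulr0 addr0.
Qed.

Lemma mul_rank1 (T : comNzRingType) n (N : 'M[T]_n) c b i j :
  (N *m (1%:M + c *: const_mx b)) i j = N i j + c * b * \sum_l N i l.
Proof.
rewrite mulmxDr mulmx1 mxE; congr (_ + _).
rewrite -scalemxAr mxE mxE -mulrA; congr (c * _).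
by rewrite mulr_sumr; apply: eq_bigr => l _; rewrite mxE mulrC.
Qed.

Lemma charpoly_deflate (R : numFieldType) k (Q : 'M[R]_k.+1) :
  (forall i, \sum_j Q i j = 1) ->
  char_poly Q * 'X = char_poly (Q - const_mx (k.+1)%:R^-1) * ('X - 1).
Proof.
move=> Hrow.
set a : R := (k.+1)%:R^-1.
have ka : (k.+1)%:R * a = 1 by rewrite mulfV // pnatr_eq0.
have kaP : (k.+1)%:R * a%:P = 1 :> {poly R} by rewrite -polyC_natr -polyCM ka.
set M := char_poly_mx Q.
set M' := char_poly_mx (Q - const_mx a).
have rowM : forall i, \sum_l M i l = 'X - 1.
  move=> i; rewrite /M /char_poly_mx.
  under eq_bigr do rewrite !mxE.
  rewrite sumrB -rmorph_sum Hrow (bigD1 i) //= eqxx big1 ?addr0 //.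
  by move=> l li; rewrite eq_sym (negbTE li).
have M'E : forall i j, M' i j = M i j + a%:P.
  move=> i j; rewrite /M' /M /char_poly_mx !mxE rmorphB /= opprB addrA.
  by rewrite [_ - _ + _]addrC addrA [_ + _ *+ _]addrC; congr (_ + _); rewrite addrC. 
have rowM' : forall i, \sum_l M' i l = 'X.
  move=> i; under eq_bigr do rewrite M'E.
  rewrite big_split /= rowM sumr_const card_ord -mulr_natl kaP.
  by rewrite subrK.
have HS : M' *m (1%:M + ('X - 2%:P) *: const_mx a%:P)
        = M *m (1%:M + ('X - 1) *: const_mx a%:P).
  apply/matrixP => i j; rewrite !mul_rank1 rowM rowM' M'E.
  rewrite -addrA; congr (_ + _).
  rewrite polyC_natr; ring.
have := congr1 determinant HS; rewrite !det_mulmx !det_rank1 //.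
rewrite -/(char_poly Q) -/(char_poly (Q - const_mx a)).
have -> : 1 + ('X - 2%:P) = 'X - 1 :> {poly R} by rewrite polyC_natr; ring.
have -> : 1 + ('X - 1) = 'X :> {poly R} by ring.
by move=> ->.
Qed.

Lemma defl_bound (R : realType) k (Q : 'M[R]_k.+1) :
  (forall i j, Q i j = Q j i) -> (forall i, \sum_j Q i j = 1) ->
  (forall i j, 1 / (3 * k.+1%:R) <= Q i j) ->
  forall x, root (char_poly (Q - const_mx (k.+1)%:R^-1)) x -> `|x| <= 2 / 3.
Proof.
move=> Hsym Hrow Hlb x; rewrite -eigenvalue_root_char => /eigenvalueP [v Hv vn0].
set a : R := (k.+1)%:R^-1.
have ka : (k.+1)%:R * a = 1 by rewrite mulfV // pnatr_eq0.
have E : forall j, (v *m (Q - const_mx a)) 0 j = (v *m Q) 0 j - (\sum_i v 0 i) * a.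
  move=> j; rewrite mulmxBr !mxE mulr_suml; congr (_ - _).
  by apply: eq_bigr => i _; rewrite mxE.
have S0 : x * \sum_j v 0 j = 0.
  rewrite mulr_sumr.
  transitivity (\sum_j (v *m (Q - const_mx a)) 0 j).
    by apply: eq_bigr => j _; rewrite Hv mxE.
  under eq_bigr do rewrite E.
  rewrite sumrB sumr_const card_ord.
  rewrite (eq_bigr (fun j => \sum_i v 0 i * Q i j)); last by move=> j _; rewrite mxE.
  rewrite exchange_big /=.
  under eq_bigr do rewrite -mulr_sumr Hrow mulr1.
  by rewrite -mulr_natr -mulrA [a * _]mulrC ka mulr1 subrr.
have [->|x0] := eqVneq x 0; first by rewrite normr0; lra.
have Sv : \sum_i v 0 i = 0.
  by move/eqP: S0; rewrite mulf_eq0 (negbTE x0) => /eqP.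
apply: (@core_bound R k.+1 Q Hsym Hrow Hlb v x _ Sv vn0).
apply/matrixP => i j; rewrite ord1 -[LHS]subr0 -(mul0r a) -Sv -E Hv.
by rewrite mxE.
Qed.

Lemma gap_bound (R : realType) m (Q : 'M[R]_m) : (2 <= m)%N ->
  (forall i j, Q i j = Q j i) -> (forall i, \sum_j Q i j = 1) ->
  (forall i j, 1 / (3 * m%:R) <= Q i j) ->
  forall s, eigvals_sorted Q s -> 1 / 3 <= spectral_gap_of s.
Proof.
case: m Q => [//|k] Q k1 Hsym Hrow Hlb s [Hsort Hs].
set Q' := Q - const_mx (k.+1)%:R^-1.
have Hdef : char_poly Q * 'X = char_poly Q' * ('X - 1) := @charpoly_deflate R k Q Hrow.
have bQ' := @defl_bound R k Q Hsym Hrow Hlb.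
have not1 : ~~ root (char_poly Q') 1.
  by apply/negP => /bQ'; rewrite normr1; lra.
have bs : forall x, x \in s -> x != 1 -> `|x| <= 2/3.
  move=> x xs x1; apply: bQ'; apply/rootP.
  have := congr1 (horner^~ x) Hdef.
  rewrite !hornerM hornerX hornerXsubC.
  have -> : (char_poly Q).[x] = 0 by apply/rootP; rewrite Hs root_prod_XsubC.
  rewrite mul0r => /esym/eqP; rewrite mulf_eq0 subr_eq0 (negbTE x1) orbF.
  by move/eqP.
have sz : size s = k.+1.
  have := size_char_poly Q; rewrite Hs size_prod_XsubC; by case.
case: s Hsort Hs bs sz => [//|x0 t] Hsort Hs bs sz.
have tx0 : forall y, y \in t -> y <= x0.
  move=> y yt; have := order_path_min _ Hsort.
  have tr : transitive (fun x y : R => y <= x).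
    by move=> b a c ab bc; apply: le_trans bc ab.
  by move=> /(_ tr)/allP/(_ y yt).
have bt : forall y, y \in t -> `|y| <= 2/3.
  move=> y yt; apply: (bs y); first by rewrite inE yt orbT.
  apply/negP => /eqP y1; subst y.
  have x01 : x0 = 1.
    have [//|x01] := eqVneq x0 1.
    have := bs x0 (mem_head _ _) x01; have := tx0 1 yt.
    move=> h1 h2; move: (le_trans (ler_norm x0) h2); lra.
  subst x0; apply/negP: not1; apply/negPn.
  have E : (\prod_(j <- t) ('X - j%:P) * 'X) * ('X - 1) = char_poly Q' * ('X - 1).
    by rewrite -Hdef Hs big_cons polyC1; ring.
  have nz : 'X - 1 != 0 :> {poly R} by rewrite -polyC1 polyXsubC_eq0.
  move/(mulIf nz): E => <-.
  by rewrite rootM root_prod_XsubC yt.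
have t0 : t != [::] by move: sz k1; case: (t) => //= [[<-]].
rewrite /spectral_gap_of.
have h1 : `|(x0 :: t)`_1| <= 2/3.
  by case: t t0 bt {Hsort Hs bs tx0 sz} => // y t' _ bt; apply: bt; rewrite mem_head.
have h2 : `|last 0 (x0 :: t)| <= 2/3.
  clear h1; case: t t0 bt {Hsort Hs bs tx0 sz} => // y t' _ bt; apply: bt => /=.
  exact: mem_last.
have := ge_max (2/3) `|(x0 :: t)`_1| `|last 0 (x0 :: t)|; rewrite h1 h2 /= => h.
lra.
Qed.

Lemma eig_real (R : rcfType) m (Q : 'M[R]_m) : (forall i j, Q i j = Q j i) ->
  forall z : R[i], root (char_poly (map_mx (real_complex R) Q)) z -> exists r : R, z = real_complex R r.
Proof.
move=> Hsym z; rewrite -eigenvalue_root_char => /eigenvalueP [v Hv vn0].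
pose q i j := real_complex R (Q i j).
have Hj : forall j, \sum_i v 0 i * q i j = z * v 0 j.
  move=> j; move/matrixP: Hv => /(_ 0 j); rewrite !mxE => <-.
  by apply: eq_bigr => i _; rewrite /map_mx mxE.
pose N := \sum_j v 0 j * (v 0 j)^*%C.
pose S := \sum_j (\sum_i v 0 i * q i j) * (v 0 j)^*%C.
have SN : S = z * N.
  rewrite /S /N mulr_sumr; apply: eq_bigr => j _; by rewrite Hj mulrA.
have cq : forall i j, (q i j)^*%C = q i j by move=> i j; exact: conjc_real.
have qsym : forall i j, q i j = q j i by move=> i j; rewrite /q Hsym.
clearbody q.
have cS : (S^*%C) = S.
  rewrite /S rmorph_sum.
  under eq_bigr do rewrite rmorphM rmorph_sum /= conjcK.
  under eq_bigr do under eq_bigr do rewrite rmorphM /= cq.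
  under eq_bigr do rewrite mulr_suml.
  rewrite exchange_big /=; apply: eq_bigr => i _.
  rewrite mulr_suml; apply: eq_bigr => j _.
  by rewrite qsym; ring.
have cN : (N^*%C) = N.
  rewrite /N rmorph_sum /=; apply: eq_bigr => j _.
  by rewrite rmorphM /= conjcK mulrC.
have N0 : N != 0.
  apply: contra vn0 => /eqP N0; apply/eqP/matrixP => i j; rewrite ord1 mxE.
  have H := @psumr_eq0P _ _ xpredT (fun j => v 0 j * (v 0 j)^*%C) (fun j _ => mulcJ_ge0 (v 0 j)) N0.
  by have /eqP := H j isT; rewrite mulf_eq0 conjc_eq0 orbb => /eqP.
have : z * N = z^*%C * N by rewrite -SN -cS SN rmorphM /= cN.
move/(mulIf N0); case: z {Hv SN Hj} => a b /= [] /eqP.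
rewrite -subr_eq0 opprK -mulr2n mulrn_eq0 /= => /eqP ->.
by exists a.
Qed.

Lemma exists_eigs (R : realType) m (Q : 'M[R]_m) : (forall i j, Q i j = Q j i) ->
  exists s, eigvals_sorted Q s.
Proof.
move=> Hsym.
have [rs Hrs] := closed_field_poly_normal (char_poly (map_mx (real_complex R) Q)).
rewrite (monicP (char_poly_monic _)) scale1r in Hrs.
have rr : forall z, z \in rs -> real_complex R (complex.Re z) = z.
  move=> z zr; have [|r ->] := @eig_real R m Q Hsym z; last by [].
  by rewrite Hrs root_prod_XsubC.
pose s0 := map (@complex.Re R) rs.
have E : char_poly Q = \prod_(x <- s0) ('X - x%:P).
  apply: (@map_poly_inj _ _ (real_complex R)).
  rewrite map_char_poly Hrs rmorph_prod big_map /=.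
  rewrite big_seq_cond [RHS]big_seq_cond; apply: eq_bigr => z /andP [zr _].
  by rewrite map_polyXsubC; congr (_ - _%:P); apply/esym/rr.
exists (sort (fun x y => y <= x) s0); split.
  by apply: sort_sorted => x y; exact: le_total.
by rewrite E; apply: perm_big; rewrite perm_sym perm_sort.
Qed.

Theorem mainTheorem8 (R : realType) (n m : nat) (p : R) (A : 'M[R]_(n, m)) :
  (0 < n)%N -> (2 <= m)%N ->
  0 < p -> p <= 1 ->
  (forall i j, A i j = 0 \/ A i j = 1) ->
  eventA p A ->
  let Q := Qmat p A in
  [/\ symmetric_mx Q, stochastic Q,
      reversible (fun _ => 1 / m%:R) Q,
      (exists s, eigvals_sorted Q s) &
      (forall s, eigvals_sorted Q s -> 1 / 3 <= spectral_gap_of s)].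
Proof.
move=> n0 m2 p0 p1 A01 HA Q.
have [Hsym Hrow Hlb] := @Qprops R n m p A n0 m2 p0 HA.
have m0 : 0 < m%:R :> R by rewrite ltr0n; apply: leq_trans m2.
split.
- by apply/matrixP => i j; rewrite mxE Hsym.
- split => // i j; apply: le_trans (Hlb i j).
  by rewrite divr_ge0 // mulr_ge0 // ltW.
- by move=> i j; rewrite Hsym.
- exact: (@exists_eigs R m Q Hsym).
- exact: (@gap_bound R m Q m2 Hsym Hrow Hlb).
Qed.
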